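(* Let $X$ be a nonempty set, $\circ:X\times X\to X$ a binary operation, and $p,q>0$ constants. If $f,g:X\to\mathbb{R}$ are $(\circ,p,q)$-convex functions satisfying \[ 0\leq \max(f(x),g(x))\qquad (x\in X), \] then there exists $\lambda\in[0,1]$ such that \[ 0\leq \lambda f(x)+(1-\lambda)g(x)\qquad (x\in X). \]
   Context: Given a nonempty set $X$, a binary operation $\circ:X\times X\to X$ and constants $p,q>0$, a function $f:X\to\mathbb{R}$ is called $(\circ,p,q)$-convex if $f(x\circ y)\leq p f(x)+q f(y)$ for all $x,y\in X$. *)

(* Defs.v *)
From Stdlib Require Import Reals.
Open Scope R_scope.

Definition opconvex {X : Type} (op : X -> X -> X) (p q : R) (f : X -> R) : Prop :=
  forall x y : X, f (op x y) <= p * f x + q * f y.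

(* Main.v *)
Require Import Defs.
From Stdlib Require Import Reals.
From Stdlib Require Import Lra Psatz Classical.
Open Scope R_scope.

Definition Ach {X : Type} (f g : X -> R) (x y : X) (a b : R) : Prop :=
  exists z, f z <= a * f x + b * f y /\ g z <= a * g x + b * g y.

Lemma Ach_op (X : Type) (op : X -> X -> X) (p q : R) (f g : X -> R) (x y : X)
  (a1 b1 a2 b2 : R) :
  0 <= p -> 0 <= q -> opconvex op p q f -> opconvex op p q g ->
  Ach f g x y a1 b1 -> Ach f g x y a2 b2 -> Ach f g x y (p*a1+q*a2) (p*b1+q*b2).
Proof.
  intros hp hq hf hg [z1 [H1 H2]] [z2 [H3 H4]].
  exists (op z1 z2). split.
  - specialize (hf z1 z2).
    assert (p * f z1 <= p * (a1 * f x + b1 * f y)) by (apply Rmult_le_compat_l; lra).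
    assert (q * f z2 <= q * (a2 * f x + b2 * f y)) by (apply Rmult_le_compat_l; lra).
    lra.
  - specialize (hg z1 z2).
    assert (p * g z1 <= p * (a1 * g x + b1 * g y)) by (apply Rmult_le_compat_l; lra).
    assert (q * g z2 <= q * (a2 * g x + b2 * g y)) by (apply Rmult_le_compat_l; lra).
    lra.
Qed.

Lemma Ach_eq {X : Type} (f g : X -> R) (x y : X) a b a' b' :
  Ach f g x y a b -> a = a' -> b = b' -> Ach f g x y a' b'.
Proof. intros H -> ->; exact H. Qed.

Lemma Ach_pad (X : Type) (op : X -> X -> X) (p q : R) (f g : X -> R) (x y : X) w n k :
  0 <= p -> 0 <= q -> opconvex op p q f -> opconvex op p q g ->
  Ach f g x y ((p+q)^n*(1-w)) ((p+q)^n*w) ->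
  Ach f g x y ((p+q)^(n+k)*(1-w)) ((p+q)^(n+k)*w).
Proof.
  intros hp hq hf hg H. induction k as [|k IH].
  - rewrite Nat.add_0_r; exact H.
  - rewrite Nat.add_succ_r. simpl.
    eapply Ach_eq. apply (Ach_op X op p q f g x y _ _ _ _ hp hq hf hg IH IH).
    all: ring.
Qed.

Definition D {X : Type} (f g : X -> R) (x y : X) (s w : R) : Prop :=
  exists n : nat, Ach f g x y (s^n*(1-w)) (s^n*w).

Lemma D_mix (X : Type) (op : X -> X -> X) (p q : R) (f g : X -> R) (x y : X) w1 w2 :
  0 < p -> 0 < q -> opconvex op p q f -> opconvex op p q g ->
  D f g x y (p+q) w1 -> D f g x y (p+q) w2 -> D f g x y (p+q) ((p*w1+q*w2)/(p+q)).
Proof.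
  intros hp hq hf hg [n1 H1] [n2 H2].
  assert (hp' : 0 <= p) by lra. assert (hq' : 0 <= q) by lra.
  pose proof (Ach_pad X op p q f g x y w1 n1 n2 hp' hq' hf hg H1) as K1.
  pose proof (Ach_pad X op p q f g x y w2 n2 n1 hp' hq' hf hg H2) as K2.
  rewrite Nat.add_comm in K2.
  exists (S (n1 + n2)).
  eapply Ach_eq. apply (Ach_op X op p q f g x y _ _ _ _ hp' hq' hf hg K1 K2).
  - simpl. field. lra.
  - simpl. field. lra.
Qed.

Lemma max0 (a b : R) : 0 <= Rmax a b -> a < 0 -> 0 <= b.
Proof. unfold Rmax; destruct (Rle_dec a b); lra. Qed.
Lemma max0' (a b : R) : 0 <= Rmax a b -> b < 0 -> 0 <= a.
Proof. unfold Rmax; destruct (Rle_dec a b); lra. Qed.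

Lemma key (X : Type) (op : X -> X -> X) (p q : R)
  (hp : 0 < p) (hq : 0 < q) (f g : X -> R)
  (hf : opconvex op p q f) (hg : opconvex op p q g)
  (hfg : forall x : X, 0 <= Rmax (f x) (g x)) (x y : X) (lam : R) :
  f x < 0 -> g y < 0 -> 0 <= lam <= 1 ->
  lam * f x + (1 - lam) * g x < 0 -> lam * f y + (1 - lam) * g y < 0 -> False.
Proof.
  intros Hfx Hgy Hl H1 H2.
  pose proof (max0 _ _ (hfg x) Hfx) as Hgx.
  pose proof (max0' _ _ (hfg y) Hgy) as Hfy.
  assert (Hl0 : 0 < lam).
  { destruct (Req_dec lam 0) as [E|E]; [subst; lra | lra]. }
  assert (Hl1 : lam < 1).
  { destruct (Req_dec lam 1) as [E|E]; [subst; lra | lra]. }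
  set (s := p + q).
  assert (hs : 0 < s) by (unfold s; lra).
  set (K := (f y - f x) * (g x - g y)).
  assert (HK : 0 < K) by (unfold K; apply Rmult_lt_0_compat; lra).
  set (N := f x * g y - g x * f y).
  assert (HN : 0 < N).
  { unfold N.
    assert (A1 : (1 - lam) * g x < lam * (- f x)) by lra.
    assert (A2 : lam * f y < (1 - lam) * (- g y)) by lra.
    assert (A3 : ((1 - lam) * g x) * (lam * f y) < (lam * (- f x)) * ((1 - lam) * (- g y))).
    { apply Rle_lt_trans with ((lam * (- f x)) * (lam * f y)).
      - apply Rmult_le_compat_r; nra.
      - apply Rmult_lt_compat_l; nra. }
    assert (A4 : 0 < lam * (1 - lam)) by nra.
    nra. }
  set (mu := Rmax (p / s) (q / s)).
  assert (Hps : 0 < p / s) by (apply Rdiv_lt_0_compat; lra).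
  assert (Hqs : 0 < q / s) by (apply Rdiv_lt_0_compat; lra).
  assert (Hps1 : p / s < 1) by (apply Rmult_lt_reg_r with s; [lra| unfold Rdiv; rewrite Rmult_assoc, Rinv_l; unfold s; lra]).
  assert (Hqs1 : q / s < 1) by (apply Rmult_lt_reg_r with s; [lra| unfold Rdiv; rewrite Rmult_assoc, Rinv_l; unfold s; lra]).
  assert (Hmu1 : mu < 1) by (apply Rmax_lub_lt; lra).
  assert (Hmu0 : p / s <= mu) by apply Rmax_l.
  assert (Hmu0' : q / s <= mu) by apply Rmax_r.
  assert (B : forall n : nat, exists l h, D f g x y s l /\ D f g x y s h /\
     (1 - l) * g x + l * g y >= 0 /\ (1 - h) * f x + h * f y >= 0 /\
     0 <= h - l <= mu ^ n).
  { induction n as [|n IH].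
    - exists 0, 1. split; [|split; [|split; [|split]]].
      + exists O. exists x. simpl. lra.
      + exists O. exists y. simpl. lra.
      + lra.
      + lra.
      + simpl. lra.
    - destruct IH as [l [h [Dl [Dh [Gl [Fh Gap]]]]]].
      pose (m := (p * l + q * h) / s).
      assert (Dm : D f g x y s m) by (apply (D_mix X op p q f g x y l h hp hq hf hg Dl Dh)).
      assert (Em1 : m - l = (q / s) * (h - l)) by (unfold m, s; field; lra).
      assert (Em2 : h - m = (p / s) * (h - l)) by (unfold m, s; field; lra).
      assert (Hmun : 0 <= mu ^ n) by lra.
      destruct Dm as [k [z [Hz1 Hz2]]].
      assert (Hsk : 0 < s ^ k) by (apply pow_lt; lra).
      destruct (Rlt_le_dec ((1 - m) * g x + m * g y) 0) as [Gm|Gm].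
      + destruct (Rlt_le_dec ((1 - m) * f x + m * f y) 0) as [Fm|Fm].
        * exfalso.
          pose proof (Rmult_lt_compat_l _ _ _ Hsk Fm) as Fm'.
          pose proof (Rmult_lt_compat_l _ _ _ Hsk Gm) as Gm'.
          assert (f z < 0) by nra.
          assert (g z < 0) by nra.
          pose proof (hfg z). unfold Rmax in *; destruct (Rle_dec (f z) (g z)); lra.
        * exists l, m. split; [exact Dl|split; [exists k, z; split; assumption|split; [exact Gl|split; [lra|]]]].
          simpl. rewrite Em1. split; [nra|].
          apply Rle_trans with (mu * (h - l)); [apply Rmult_le_compat_r; lra|].
          apply Rmult_le_compat_l; lra.
      + exists m, h. split; [exists k, z; split; assumption|split; [exact Dh|split; [lra|split; [exact Fh|]]]].
        simpl. rewrite Em2. split; [nra|].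
        apply Rle_trans with (mu * (h - l)); [apply Rmult_le_compat_r; lra|].
        apply Rmult_le_compat_l; lra. }
  assert (Hmuabs : Rabs mu < 1).
  { rewrite Rabs_right; lra. }
  destruct (pow_lt_1_zero mu Hmuabs (N / K)) as [M HM].
  { apply Rdiv_lt_0_compat; lra. }
  specialize (HM M (Nat.le_refl M)).
  destruct (B M) as [l [h [_ [_ [Gl [Fh Gap]]]]]].
  assert (Hmp : 0 <= mu ^ M) by lra.
  rewrite Rabs_right in HM by lra.
  assert (L1 : (h - l) * K >= N).
  { unfold K, N.
    assert (P1 : l * (g x - g y) <= g x) by lra.
    assert (P2 : h * (f y - f x) >= - f x) by lra.
    assert (P3 : l * (g x - g y) * (f y - f x) <= g x * (f y - f x)) by (apply Rmult_le_compat_r; lra).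
    assert (P4 : h * (f y - f x) * (g x - g y) >= - f x * (g x - g y)).
    { apply Rle_ge. apply Rmult_le_compat_r; lra. }
    nra. }
  assert (L2 : (h - l) * K <= mu ^ M * K) by (apply Rmult_le_compat_r; lra).
  assert (L3 : mu ^ M * K < N).
  { apply Rmult_lt_reg_r with (/ K). apply Rinv_0_lt_compat; lra.
    rewrite Rmult_assoc, Rinv_r by lra. unfold Rdiv in HM. lra. }
  lra.
Qed.

Lemma dle1 a d t : 0 < d -> a / d <= t -> a <= t * d.
Proof. intros Hd H. replace a with ((a/d)*d) by (field; lra). nra. Qed.
Lemma dlt1 a d t : 0 < d -> t < a / d -> t * d < a.
Proof. intros Hd H. replace a with ((a/d)*d) by (field; lra). nra. Qed.
Lemma dlt2 a d t : 0 < d -> a / d < t -> a < t * d.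
Proof. intros Hd H. replace a with ((a/d)*d) by (field; lra). nra. Qed.
Lemma dlt3 a d t : 0 < d -> a < t * d -> a / d < t.
Proof. intros Hd H. apply Rmult_lt_reg_r with d; [lra|].
  replace (a / d * d) with a by (field; lra). lra. Qed.
Lemma dle3 a d t : 0 < d -> a <= t * d -> a / d <= t.
Proof. intros Hd H. apply Rmult_le_reg_r with d; [lra|].
  replace (a / d * d) with a by (field; lra). lra. Qed.
Lemma dge0 a d : 0 < d -> 0 <= a -> 0 <= a / d.
Proof. intros Hd H. unfold Rdiv. apply Rmult_le_pos; [lra|]. left; apply Rinv_0_lt_compat; lra. Qed.

Theorem theorem3p5 (X : Type) (x0 : X) (op : X -> X -> X) (p q : R)
  (hp : 0 < p) (hq : 0 < q) (f g : X -> R)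
  (hf : opconvex op p q f) (hg : opconvex op p q g)
  (hfg : forall x : X, 0 <= Rmax (f x) (g x)) :
  exists lam : R, 0 <= lam <= 1 /\
    forall x : X, 0 <= lam * f x + (1 - lam) * g x.
Proof.
  set (E := fun t : R => t = 0 \/ exists z, g z < 0 /\ t = - g z / (f z - g z)).
  assert (Eb : bound E).
  { exists 1. intros t [Ht|[z [Hz Ht]]]; [lra|].
    pose proof (max0' _ _ (hfg z) Hz). subst t. apply dle3; lra. }
  destruct (completeness E Eb (ex_intro _ 0 (or_introl eq_refl))) as [t [Hub Hlub]].
  assert (Ht0 : 0 <= t) by (apply Hub; left; reflexivity).
  assert (Ht1 : t <= 1).
  { apply Hlub. intros e [He|[z [Hz He]]]; [lra|].
    pose proof (max0' _ _ (hfg z) Hz). subst e. apply dle3; lra. }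
  exists t. split; [lra|].
  intros z.
  destruct (Rlt_le_dec (g z) 0) as [Hgz|Hgz].
  - pose proof (max0' _ _ (hfg z) Hgz) as Hfz.
    assert (C : - g z / (f z - g z) <= t) by (apply Hub; right; exists z; split; [exact Hgz|reflexivity]).
    apply dle1 in C; [|lra]. nra.
  - destruct (Rlt_le_dec (f z) 0) as [Hfz|Hfz]; [|nra].
    destruct (Rle_lt_dec 0 (t * f z + (1 - t) * g z)) as [Hok|Hbad]; [exact Hok|].
    exfalso.
    set (l0 := g z / (g z - f z)).
    assert (Hl0 : 0 <= l0) by (apply dge0; lra).
    assert (Hl0t : l0 < t) by (apply dlt3; [lra|]; nra).
    assert (Hnub : ~ is_upper_bound E l0).
    { intro U. specialize (Hlub l0 U). lra. }
    unfold is_upper_bound in Hnub.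
    apply not_all_ex_not in Hnub. destruct Hnub as [e He].
    apply imply_to_and in He. destruct He as [Ee Hel].
    apply Rnot_le_lt in Hel.
    destruct Ee as [Ee|[y [Hgy Ey]]]; [lra|].
    pose proof (max0' _ _ (hfg y) Hgy) as Hfy.
    assert (He1 : e <= 1) by (subst e; apply dle3; lra).
    set (lam := (l0 + e) / 2).
    apply (key X op p q hp hq f g hf hg hfg z y lam Hfz Hgy).
    + unfold lam; lra.
    + assert (A : l0 < lam) by (unfold lam; lra).
      apply dlt2 in A; [|lra]. nra.
    + assert (A : lam < e) by (unfold lam; lra).
      rewrite Ey in A. apply dlt1 in A; [|lra]. nra.
Qed.
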